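(* Let $d \geq 2$ be a fixed integer. There is a constant $c = c(d) > 0$ such that for every positive integer $n$ there is a subset $A \subset [n]^d$ with $|A| \geq c n$ such that no $d+1$ points of $A$ lie on a common hyperplane and no $2d$ points of $A$ lie on a common sphere.
   Context: $[n]=\{1,\dots,n\}$. A sphere means a $(d-1)$-dimensional sphere in $\mathbb{R}^d$; a hyperplane means an affine hyperplane in $\mathbb{R}^d$. *)

(* Defs.v *)
From HB Require Import structures.
From mathcomp Require Import all_boot all_order all_algebra.
From mathcomp Require Import reals.
Set Implicit Arguments. Unset Strict Implicit. Unset Printing Implicit Defensive.
Import Order.TTheory GRing.Theory Num.Theory.
Local Open Scope ring_scope.

(* The grid [n]^d, [n] = {1,...,n}: a grid point is g : {ffun 'I_d -> 'I_n},
   whose i-th coordinate is the integer (g i) + 1 in {1,...,n}. *)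
Definition grid_pt (R : realType) (d n : nat) (g : {ffun 'I_d -> 'I_n}) : 'I_d -> R :=
  fun i => ((g i).+1)%:R.

Definition on_hyperplane (R : realType) (d : nat) (a : 'I_d -> R) (b : R) (x : 'I_d -> R) : Prop :=
  \sum_(i < d) a i * x i = b.

Definition on_sphere (R : realType) (d : nat) (c : 'I_d -> R) (r : R) (x : 'I_d -> R) : Prop :=
  \sum_(i < d) (x i - c i) ^+ 2 = r ^+ 2.

Definition no_k_on_hyperplane (R : realType) (d n k : nat) (A : {set {ffun 'I_d -> 'I_n}}) : Prop :=
  forall (a : 'I_d -> R) (b : R), (exists i, a i != 0) ->
  forall S : {set {ffun 'I_d -> 'I_n}}, S \subset A ->
    (forall x, x \in S -> on_hyperplane a b (grid_pt R x)) -> (#|S| < k)%N.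

Definition no_k_on_sphere (R : realType) (d n k : nat) (A : {set {ffun 'I_d -> 'I_n}}) : Prop :=
  forall (c : 'I_d -> R) (r : R), 0 < r ->
  forall S : {set {ffun 'I_d -> 'I_n}}, S \subset A ->
    (forall x, x \in S -> on_sphere c r (grid_pt R x)) -> (#|S| < k)%N.

(* Main.v *)
Require Import Defs.
From HB Require Import structures.
From mathcomp Require Import all_boot all_order all_algebra.
From mathcomp Require Import reals.
From mathcomp Require Import ring lra zify.
Import Order.TTheory GRing.Theory Num.Theory.
Set Implicit Arguments. Unset Strict Implicit. Unset Printing Implicit Defensive.

Lemma bin_le_pow n m : 'C(n.+1, m) <= 2 ^ n.
Proof.
elim: n m => [|n IH] [|m].
- by [].
- by rewrite binS !bin0n; case: m.
- by rewrite bin0 expn_gt0.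
rewrite binS expnS mul2n -addnn; apply: leq_add; exact: IH.
Qed.

Lemma bin_odd_le k : 'C(k.*2.+1, k) <= 4 ^ k.
Proof. by have := bin_le_pow k.*2 k; rewrite -muln2 mulnC expnM. Qed.

Lemma prime_dvd_fact_le p n : prime p -> p %| n`! -> p <= n.
Proof.
move=> pp; elim: n => [|n IH]; first by rewrite fact0 Euclid_dvd1.
rewrite factS Euclid_dvdM // => /orP[h|h]; last by apply: leqW; exact: IH.
by apply: dvdn_leq.
Qed.

Lemma prod_primes_dvd (P : pred nat) c R :
  (forall p, P p -> prime p) -> (forall p, P p -> p %| c) ->
  \prod_(0 <= p < R) (if P p then p else 1) %| c.
Proof.
move=> hP hc; elim: R => [|R IH]; first by rewrite big_geq.
rewrite big_nat_recr //=; case: ifP => PR; last by rewrite muln1.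
rewrite Gauss_dvd ?IH ?hc //.
rewrite coprime_sym prime_coprime ?hP //.
rewrite Euclid_dvd_prod ?hP // big_nat_cond.
elim/big_rec: _ => // q b /andP[/andP[_ qR] _] Hb.
rewrite negb_or Hb andbT.
case: ifP => Pq; last by rewrite dvdn1; apply/eqP => R1; have := hP _ PR; rewrite R1.
apply/negP => /dvdn_leq h; have := h (prime_gt0 (hP _ Pq)); rewrite leqNgt qR.
done.
Qed.

Definition pr B R := \prod_(0 <= p < R) (if prime p && (p <= B) then p else 1).

Lemma prod_single c x R : 0 < x -> \prod_(0 <= p < R) (if p == c then x else 1) <= x.
Proof.
move=> x0; elim: R => [|R IH]; first by rewrite big_geq.
rewrite big_nat_recr //=; case: eqP => [->|_]; last by rewrite muln1.
rewrite (@big_nat_cond _ _ _ 0 c) (eq_bigr (fun _ => 1)); last first.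
  by move=> i /andP[/andP[_ ic] _]; rewrite (ltn_eqF ic).
by rewrite -big_nat_cond big1_eq mul1n.
Qed.

Lemma pr_small B R : B <= 1 -> pr B R = 1.
Proof.
move=> hB; apply: big1 => p _; case: ifP => // /andP[pp pB].
by have := prime_gt1 pp; lia.
Qed.

Lemma prim_bound B R : pr B R <= 4^B.
Proof.
elim/ltn_ind: B => B IH.
case: (leqP B 1) => hB1; first by rewrite pr_small ?expn_gt0.
case: (boolP (odd B)) => oB.
  have [k hk] : exists k, B = k.*2.+1 by exists B./2; rewrite -{1}(odd_double_half B) oB add1n.
  have k1 : 0 < k by move: hB1; rewrite hk; lia.
  pose P := fun p => prime p && (k.+1 < p) && (p <= k.*2.+1).
  have e : pr B R = pr k.+1 R * \prod_(0 <= p < R) (if P p then p else 1).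
    rewrite /pr -big_split; apply: eq_bigr => p _; rewrite /P hk.
    case: (prime p); case: (leqP p k.+1); case: (leqP p k.*2.+1); move=> * /=; lia.
  have hQ : \prod_(0 <= p < R) (if P p then p else 1) <= 'C(k.*2.+1, k).
    apply: dvdn_leq; first by rewrite bin_gt0; lia.
    apply: prod_primes_dvd => p; first by case/andP => /andP[].
    case/andP => /andP[pp h1] h2.
    have hk2 : k <= k.*2.+1 by lia.
    have ef := bin_fact hk2; have : p %| (k.*2.+1)`! by apply: dvdn_fact; rewrite prime_gt0.
    rewrite -ef (_ : k.*2.+1 - k = k.+1); last by lia.
    rewrite (Euclid_dvdM _ _ pp) (Euclid_dvdM (k`!) _ pp) => /orP[//|/orP[h|h]]; have := prime_dvd_fact_le pp h; lia.
  rewrite e; apply: (leq_trans (leq_mul (IH k.+1 _) hQ)); first by rewrite hk; lia.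
  apply: (leq_trans (leq_mul (leqnn _) (bin_odd_le k))).
  by rewrite -expnD hk; apply: leq_pexp2l => //; lia.
case: (ltngtP B 2) => hB2; first by lia.
  have e : pr B R = pr B.-1 R.
    rewrite /pr; apply: eq_bigr => p _; case pp: (prime p) => //=.
    case: (eqVneq p B) => [pB|pB].
      by move: oB hB2; rewrite -pB; case: (even_prime pp) => [->|->].
    have -> : (p <= B.-1) = (p <= B) by apply/idP/idP; lia.
    by [].
  rewrite e; apply: (leq_trans (IH _ _)); first by lia.
  by apply: leq_pexp2l => //; lia.
subst B; apply: (leq_trans _ (_ : 2 <= 4^2)) => //.
apply: (leq_trans _ (prod_single 2 R (_ : 0 < 2))) => //.
apply: leq_prod => p _; case pp: (prime p); last by case: eqP.
case: (leqP p 2) => h2 /=; last by case: eqP.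
by have := prime_gt1 pp; case: eqP => [->//|]; lia.
Qed.

Lemma logn_fact_ext p n N : prime p -> n < N ->
  logn p n`! = \sum_(1 <= k < N) n %/ p ^ k.
Proof.
move=> pp nN; rewrite logn_fact // [in RHS](@big_cat_nat _ _ _ n.+1) //=.
have -> : \sum_(n.+1 <= k < N) n %/ p ^ k = 0.
  rewrite big_nat_cond big1 // => k /andP[/andP[h1 _] _].
  apply: divn_small; apply: (leq_trans h1); apply: ltnW; apply: ltn_expl.
  exact: prime_gt1.
by rewrite addn0.
Qed.

Lemma div2_le m q : 0 < q -> (m.*2) %/ q <= (m %/ q).*2 + 1.
Proof.
move=> q0; rewrite -ltnS ltn_divLR //.
have := ltn_ceil m q0; rewrite -!muln2; nia.
Qed.

Lemma sum_ind L N : L < N -> \sum_(1 <= k < N) (k <= L) = L.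
Proof.
move=> LN; rewrite (@big_cat_nat _ _ _ L.+1) //=.
have -> : \sum_(L.+1 <= k < N) (k <= L) = 0.
  by rewrite big_nat_cond big1 // => k /andP[/andP[h1 _] _]; rewrite leqNgt h1.
rewrite addn0 big_nat_cond (eq_bigr (fun _ => 1)); last first.
  by move=> k /andP[/andP[_ h1] _]; rewrite ltnS in h1; rewrite h1.
by rewrite -big_nat_cond sum_nat_const_nat muln1 subn1.
Qed.

Lemma logC_split p m : prime p ->
  logn p (m.*2)`! = logn p 'C(m.*2, m) + (logn p m`!).*2.
Proof.
move=> pp; have hm : m <= m.*2 by rewrite -addnn leq_addr.
have ef := bin_fact hm; rewrite (_ : m.*2 - m = m) in ef; last by rewrite -addnn addnK.
by rewrite -ef !lognM ?muln_gt0 ?fact_gt0 ?bin_gt0 // addnn.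
Qed.

Lemma sum3 (f g h : nat -> nat) a b :
  \sum_(a <= k < b) f k <= \sum_(a <= k < b) (g k + g k + h k) ->
  \sum_(a <= k < b) f k <= (\sum_(a <= k < b) g k).*2 + \sum_(a <= k < b) h k.
Proof. by rewrite !big_split /= addnn. Qed.

Lemma vC_bound p m : prime p -> 0 < m -> p ^ logn p 'C(m.*2, m) <= m.*2.
Proof.
move=> pp m0; have p1 := prime_gt1 pp.
have m20 : 0 < m.*2 by rewrite double_gt0.
have := trunc_log_bounds p1 m20; set L := trunc_log p m.*2 => /andP[hL1 hL2].
have L2 : L < m.*2.+1 by apply: (leq_trans (ltn_expl L p1)); exact: leqW hL1.
suff : logn p 'C(m.*2, m) <= L.
  by move=> h; apply: leq_trans hL1; apply: leq_pexp2l => //; lia.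
have h1 := logC_split m pp.
have h2 : logn p (m.*2)`! <= (logn p m`!).*2 + L.
  rewrite (@logn_fact_ext p m.*2 m.*2.+1) // (@logn_fact_ext p m m.*2.+1) //; last by lia.
  rewrite -(sum_ind L2); apply: sum3.
  rewrite big_nat_cond [X in _ <= X]big_nat_cond; apply: leq_sum => k /andP[/andP[k1 _] _].
  case: (leqP k L) => hk.
    by rewrite addnn addn1 -addn1; apply: div2_le; rewrite expn_gt0 (ltnW p1).
  rewrite addn0 divn_small //; apply: (leq_trans hL2); apply: leq_pexp2l => //; lia.
lia.
Qed.

Lemma vC_zero p m : prime p -> p <= m -> m.*2 < 3 * p -> m.*2 < p * p ->
  logn p 'C(m.*2, m) = 0.
Proof.
move=> pp pm h3 h4; have p1 := prime_gt1 pp.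
have h1 := logC_split m pp.
have tail : forall n, n <= m.*2 -> \sum_(1 <= k < m.*2.+1) n %/ p ^ k = n %/ p.
  move=> n hn; rewrite big_ltn; last by lia.
  rewrite expn1 big_nat_cond big1 ?addn0 // => k /andP[/andP[k1 _] _].
  apply: divn_small; apply: (leq_ltn_trans hn); apply: (leq_trans h4).
  by rewrite mulnn; apply: leq_pexp2l; lia.
rewrite (@logn_fact_ext p m.*2 m.*2.+1) // (@logn_fact_ext p m m.*2.+1) // in h1; last by lia.
rewrite !tail // in h1; last by lia.
have e2 : m.*2 %/ p = 2.
  have a : 2 <= m.*2 %/ p by rewrite leq_divRL ?prime_gt0 //; lia.
  have b : m.*2 %/ p < 3 by rewrite ltn_divLR ?prime_gt0 //; lia.
  lia.
have e1 : m %/ p = 1.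
  have a : 1 <= m %/ p by rewrite leq_divRL ?prime_gt0 //; lia.
  have b : m %/ p < 2 by rewrite ltn_divLR ?prime_gt0 //; lia.
  lia.
rewrite e1 e2 in h1; lia.
Qed.

Lemma isqrt n : exists K, K * K <= n < K.+1 * K.+1.
Proof.
elim: n => [|n [K /andP[h1 h2]]]; first by exists 0.
case: (ltnP n.+1 (K.+1 * K.+1)) => h3; first by exists K; rewrite h3 andbT; lia.
exists K.+1; apply/andP; split; first by [].
nia.
Qed.

Lemma binom_lower m : 4^m <= m.*2.+1 * 'C(m.*2, m).
Proof.
elim: m => [|m IH]; first by [].
have e1 := mul_bin_diag (m.*2).+2 m.
have e2 := mul_bin_down (m.*2).+1 m.
rewrite /= in e1 e2.
rewrite (_ : m.*2.+1 - m = m.+1) in e2; last by lia.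
rewrite doubleS.
set C := 'C(m.*2, m) in IH e2 *; set C1 := 'C(m.*2.+1, m) in e1 e2 *.
set C2 := 'C(m.*2.+2, m.+1) in e1 *.
set X := 4 ^ m in IH *.
rewrite expnS -/X.
have e3 : m.+1 * C2 = (m.*2.+1 * C).*2.
  rewrite -e1 e2 -!mul2n; lia.
suff : m.+1 * (4 * X) <= m.+1 * (m.*2.+3 * C2) by rewrite leq_pmul2l.
have e4 : m.+1 * (m.*2.+3 * C2) = m.*2.+3 * (m.+1 * C2) by rewrite mulnCA.
rewrite e4 e3.
have : m.+1 * (4 * X) <= m.+1 * (4 * (m.*2.+1 * C)) by rewrite leq_pmul2l // leq_pmul2l.
move=> h; apply: (leq_trans h); rewrite -!mul2n; nia.
Qed.

Lemma prod_minn (P : pred nat) c B R : (forall p, P p -> p < B) -> 0 < c ->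
  \prod_(0 <= p < R) (if P p then c else 1) <= c ^ (minn R B).
Proof.
move=> hP c0; elim: R => [|R IH]; first by rewrite big_geq // min0n.
rewrite big_nat_recr //=; case: ifP => PR.
  have RB := hP _ PR; rewrite (_ : minn R.+1 B = (minn R B).+1); last by lia.
  by rewrite expnSr leq_mul2r IH orbT.
rewrite muln1; apply: (leq_trans IH); apply: leq_pexp2l => //; lia.
Qed.

Lemma c65 : 65^8 <= 2 * 64^8. Proof. lia. Qed.
Lemma c64 : 65^8 <= 2^64. Proof. lia. Qed.

Lemma abs_step (A B x y : nat) : 0 < A -> B <= 2 * A -> A * x <= B * y -> x <= 2 * y.
Proof.
move=> A0 hB h.
have : A * x <= A * (2 * y).
  apply: (leq_trans h). rewrite mulnA (mulnC A). exact: leq_mul hB (leqnn y).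
by rewrite leq_pmul2l.
Qed.

Lemma pow8_step u : 64 <= u -> (u.+1)^8 <= 2 * u^8.
Proof.
move=> hu.
have h0 : 64 * u.+1 <= 65 * u by lia.
have h1 : (64 * u.+1)^8 <= (65 * u)^8 by rewrite leq_exp2r.
rewrite !expnMn in h1.
have A0 : 0 < 64^8 by rewrite expn_gt0.
exact: (abs_step A0 c65 h1).
Qed.

Lemma pow8 K : 64 <= K -> (K.+1)^8 <= 2^K.
Proof.
elim: K => [//|K IH]; rewrite leq_eqVlt => /orP[/eqP hK|hK].
  rewrite -hK. exact: c64.
have h1 := pow8_step (ltnW hK). have h2 := IH hK.
rewrite (expnS 2 K). apply: (leq_trans h1). by rewrite leq_mul2l h2 orbT.
Qed.

Lemma numeric K m : 64 <= K -> K * K <= 2 * m -> 2 * m < K.+1 * K.+1 ->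
  4^m <= (2 * m+1)^3 * (2 * m)^(3*K+3) -> False.
Proof.
move=> hK h1 h2 h.
have e1 : (2 * m+1)^3 * (2 * m)^(3*K+3) <= (K.+1)^(6*K+12).
  have hX : 2 * m+1 <= K.+1^2 by rewrite mulnn in h2; lia.
  apply: (@leq_trans ((2 * m+1)^3 * (2 * m+1)^(3*K+3))).
    by apply: leq_mul => //; rewrite leq_exp2r //; lia.
  rewrite -expnD (_ : 6*K+12 = 2 * (3 + (3*K+3))); last by lia.
  by rewrite expnM leq_exp2r.
have e2 : 2^(K*K) <= 4^m.
  by rewrite (_ : 4 = 2^2) // -expnM leq_exp2l.
have e3 := leq_trans e2 (leq_trans h e1).
have e4 : (2^(K*K))^8 <= ((K.+1)^(6*K+12))^8 by rewrite leq_exp2r.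
have e45 : ((K.+1)^(6*K+12))^8 = ((K.+1)^8)^(6*K+12) by rewrite -!expnM mulnC.
have e5 : ((K.+1)^8)^(6*K+12) <= (2^K)^(6*K+12).
  by rewrite leq_exp2r; [exact: pow8 hK | lia].
have := leq_trans e4 (leq_trans (eq_leq e45) e5); rewrite -!expnM leq_exp2l //.
clear -hK => H.
have : K * (K * 8) <= K * (6 * K + 12) by rewrite mulnA.
rewrite leq_mul2l; case/orP; first by move/eqP=> K0; rewrite K0 in hK.
lia.
Qed.

Lemma bertrand_large m : 4225 <= m -> exists2 p, prime p & m < p <= m.*2.
Proof.
move=> hm.
case: (boolP [exists p : 'I_(m.*2.+1), prime p && (m < p)]) => [/existsP[p /andP[pp mp]]|/existsPn H].
  by exists p => //; rewrite mp -ltnS ltn_ord.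
exfalso.
have H' : forall p, prime p -> p <= m.*2 -> p <= m.
  move=> p pp hp; have := H (Ordinal (hp : p < m.*2.+1)); by rewrite /= pp /= -leqNgt.
have m0 : 0 < m by lia.
have [K /andP[hK1 hK2]] := isqrt m.*2.
have K64 : 64 <= K by nia.
set N := 'C(m.*2, m).
have N0 : 0 < N by rewrite bin_gt0 -addnn leq_addl.
have eN : N = \prod_(0 <= p < N.+1) p ^ logn p N.
  by rewrite -{1}(partnT N0) /partn; apply: eq_bigl.
have hterm : forall p, p ^ logn p N <=
    (if prime p && (p * p <= m.*2) then m.*2 else 1) *
    (if prime p && (p <= m.*2 %/ 3) then p else 1).
  move=> p; case pp: (prime p); last by rewrite /logn pp.
  have hb := vC_bound pp m0; rewrite -/N in hb.
  have p0 := prime_gt0 pp.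
  case: (leqP (p * p) m.*2) => h1 /=.
    by apply: (leq_trans hb); case: ifP => _; rewrite ?muln1 // leq_pmulr.
  have v1 : logn p N <= 1.
    case: (leqP (logn p N) 1) => // hv; have : p ^ 2 <= p ^ logn p N by apply: leq_pexp2l.
    by rewrite -mulnn => h2; have := leq_trans h2 hb; lia.
  rewrite mul1n; case: (leqP p (m.*2 %/ 3)) => h2 /=.
    by rewrite -[X in _ <= X](expn1 p); apply: leq_pexp2l.
  suff -> : logn p N = 0 by [].
  case: (leqP p m) => h3.
    apply: vC_zero => //; move: h2; rewrite ltn_divLR //; lia.
  case: (posnP (logn p N)) => // v0; exfalso.
  have : p <= m.*2.
    by apply: leq_trans hb; rewrite -[X in X <= _](expn1 p); apply: leq_pexp2l; lia.
  by move/(H' _ pp); lia.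
have hprod : N <= \prod_(0 <= p < N.+1) (if prime p && (p * p <= m.*2) then m.*2 else 1) *
                  \prod_(0 <= p < N.+1) (if prime p && (p <= m.*2 %/ 3) then p else 1).
  by rewrite {1}eN -big_split; apply: leq_prod => p _; exact: hterm.
have hA : \prod_(0 <= p < N.+1) (if prime p && (p * p <= m.*2) then m.*2 else 1) <= (m.*2) ^ K.+1.
  apply: (leq_trans (prod_minn (B := K.+1) _ _ _)); last first.
  - by apply: leq_pexp2l; [lia | exact: geq_minr].
  - by lia.
  move=> p /andP[_ hp]; rewrite ltnS; case: (leqP p K) => // hpk; nia.
have hB := prim_bound (m.*2 %/ 3) N.+1.
have main : 4^m <= m.*2.+1 * ((m.*2) ^ K.+1 * 4^(m.*2 %/ 3)).
  apply: (leq_trans (binom_lower m)); rewrite leq_mul2l; apply/orP; right.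
  apply: (leq_trans hprod); exact: leq_mul hA hB.
set D := m.*2 %/ 3 in main.
have D3 : D * 3 <= m.*2 by apply: leq_trunc_div.
have c1 : (4^m)^3 <= (m.*2.+1 ^ 3 * (m.*2) ^ (3 * K + 3)) * 4^(D*3).
  have := main; rewrite -(leq_exp2r _ _ (_ : 0 < 3)) // => h.
  apply: (leq_trans h); rewrite !expnMn -!expnM; apply: eq_leq.
  rewrite mulnA (_ : K.+1 * 3 = 3 * K + 3) //; lia.
have c2 : 4^(D*3) <= 4^(m.*2) by apply: leq_pexp2l.
have c3 : (4^m)^3 = 4^m * 4^(m.*2) by rewrite -expnM -expnD; congr (_ ^ _); lia.
have c4 : 4^m * 4^(m.*2) <= (m.*2.+1 ^ 3 * (m.*2) ^ (3 * K + 3)) * 4^(m.*2).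
  by rewrite -c3; apply: (leq_trans c1); rewrite leq_mul2l c2 orbT.
rewrite leq_mul2r expn_eq0 /= in c4.
apply: (numeric K64 (m := m)); rewrite ?mul2n //.
by rewrite addn1.
Qed.

Local Open Scope ring_scope.

Lemma det_nat_mx (F : pzRingType) k (E : 'I_k -> 'I_k -> nat) :
  \det (\matrix_(j, l) (E j l)%:R : 'M[F]_k) = (\det (\matrix_(j, l) (E j l)%:Z))%:~R.
Proof.
rewrite -det_map_mx; congr (\det _); apply/matrixP => j l; rewrite !mxE.
by rewrite pmulrn.
Qed.

Lemma transfer (R : realType) (p : nat) k (E : 'I_k -> 'I_k -> nat) : prime p ->
  (exists2 v : 'rV[R]_k, v != 0 & v *m \matrix_(j, l) (E j l)%:R = 0) ->
  exists2 w : 'rV['F_p]_k, w != 0 & w *m \matrix_(j, l) (E j l)%:R = 0.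
Proof.
move=> pp /det0P; rewrite det_nat_mx intr_eq0 => /eqP h.
apply/det0P; by rewrite det_nat_mx h.
Qed.

Lemma few_roots (F : idomainType) k (h : {poly F}) (z : 'I_k -> F) :
  injective z -> (size h <= k)%N -> (forall l, h.[z l] = 0) -> h = 0.
Proof.
move=> zi hs hz; apply/eqP; apply: contraT => hn.
have := max_poly_roots (rs := [seq z l | l <- enum 'I_k]) hn.
rewrite map_inj_uniq ?enum_uniq // size_map size_enum_ord.
have -> : all (root h) [seq z l | l <- enum 'I_k].
  by apply/allP => y /mapP[l _ ->]; rewrite /root hz.
by move=> /(_ isT isT) h1; have := leq_trans h1 hs; rewrite ltnn.
Qed.

Lemma Fp_inj p a b : prime p -> (a < p)%N -> (b < p)%N -> (a%:R : 'F_p) = b%:R -> a = b.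
Proof.
move=> pp ha hb /(congr1 (@nat_of_ord _)); rewrite !val_Fp_nat // !modn_small //.
Qed.

Lemma Fp_natX p t j : prime p -> ((t ^ j %% p)%N%:R : 'F_p) = (t%:R) ^+ j.
Proof. by move=> pp; rewrite Fp_nat_mod // natrX. Qed.

Lemma hyper_core (R : realType) p d (x : 'I_d.+1 -> nat) (a : 'I_d -> R) (b : R) :
  prime p -> injective x -> (forall l, (x l < p)%N) -> (exists i, a i != 0) ->
  (forall l, \sum_(i < d) a i * ((x l ^ i.+1 %% p).+1)%:R = b) -> False.
Proof.
move=> pp xi xp [i0 ai0] hrel.
pose E := fun (j l : 'I_d.+1) => (x l ^ j %% p)%N.
pose v : 'rV[R]_d.+1 := \row_j (if unlift ord0 j is Some i then a i else \sum_i a i - b).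
have v0 : v != 0.
  apply/eqP => /rowP /(_ (lift ord0 i0)); rewrite !mxE liftK => h.
  by rewrite h eqxx in ai0.
have vM : v *m \matrix_(j, l) (E j l)%:R = 0.
  apply/rowP => l; rewrite !mxE big_ord_recl.
  rewrite (eq_bigr (fun i => a i * (x l ^ i.+1 %% p)%:R)); last first.
    by move=> i _; rewrite !mxE liftK.
  rewrite !mxE unlift_none /E expn0 modn_small ?prime_gt1 // mulr1.
  have := hrel l.
  rewrite (eq_bigr (fun i => a i * (x l ^ i.+1 %% p)%:R + a i)); last first.
    by move=> i _; rewrite -natr1 mulrDr mulr1.
  rewrite big_split /= => <-; lra.
have [w w0 wM] := transfer pp (ex_intro2 _ _ v v0 vM).
pose h : {poly 'F_p} := \poly_(j < d.+1) w 0 (inord j).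
have hz : forall l, h.[(x l)%:R] = 0.
  move=> l; move/rowP: wM => /(_ l); rewrite !mxE => <-.
  rewrite horner_poly; apply: eq_bigr => j _; rewrite !mxE inord_val /E Fp_natX //.
have h0 : h = 0.
  apply: (few_roots (z := fun l => (x l)%:R)) => //; last exact: size_poly.
  by move=> l l' /(Fp_inj pp (xp l) (xp l')) /xi.
move/eqP: w0; apply; apply/rowP => j; rewrite mxE.
have := congr1 (fun q : {poly 'F_p} => q`_j) h0; rewrite coef_poly ltn_ord inord_val coef0.
by move=> ->.
Qed.

Definition Sp p d : {poly 'F_p} := \sum_(i < d) ('X^(i.+1) + 1) ^+ 2.
Definition Qn p d t := (\sum_(i < d) ((t ^ i.+1 %% p).+1) ^ 2)%N.

Lemma Sp_eval p d t : prime p -> (Sp p d).[t%:R] = (Qn p d t)%:R.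
Proof.
move=> pp; rewrite /Sp /Qn horner_sum natr_sum; apply: eq_bigr => i _.
by rewrite natrX -natr1 Fp_natX // !hornerE.
Qed.

Lemma sphere_sub (R : realType) p d (x : 'I_d.+2 -> nat) (c : 'I_d -> R) (r : R) :
  prime p -> injective x -> (forall l, (x l < p)%N) ->
  (forall l, \sum_(i < d) (((x l ^ i.+1 %% p).+1)%:R - c i) ^+ 2 = r ^+ 2) ->
  exists g : {poly 'F_p}, (size g <= d.+1)%N /\ forall l, (Sp p d + g).[(x l)%:R] = 0.
Proof.
move=> pp xi xp hrel.
pose E := fun (j l : 'I_d.+2) =>
  if unlift ord0 j is Some j' then (x l ^ j' %% p)%N else Qn p d (x l).
pose K0 := \sum_i c i ^+ 2 - r ^+ 2 - 2 * \sum_i c i.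
pose v : 'rV[R]_d.+2 := \row_j
  (if unlift ord0 j is Some j' then (if unlift ord0 j' is Some i then - 2 * c i else K0) else 1).
have v0 : v != 0.
  by apply/eqP => /rowP /(_ ord0); rewrite !mxE unlift_none; apply/eqP; rewrite oner_eq0.
have vM : v *m \matrix_(j, l) (E j l)%:R = 0.
  apply/rowP => l; rewrite !mxE big_ord_recl big_ord_recl.
  rewrite (eq_bigr (fun i => - 2 * c i * (x l ^ i.+1 %% p)%:R)); last first.
    by move=> i _; rewrite !mxE !liftK /E liftK.
  rewrite !mxE unlift_none liftK unlift_none /E unlift_none liftK expn0.
  rewrite modn_small ?prime_gt1 // mulr1 mul1r.
  rewrite /Qn natr_sum.
  set y := fun i : 'I_d => ((x l ^ i.+1 %% p)%N%:R : R).
  have e0 : \sum_(i < d) (((x l ^ i.+1 %% p).+1) ^ 2)%N%:R = \sum_i (y i + 1) ^+ 2.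
    by apply: eq_bigr => i _; rewrite natrX -natr1.
  have e1 : \sum_i (y i + 1) ^+ 2 + \sum_i (- 2 * c i * y i) =
      \sum_i ((y i + 1 - c i) ^+ 2) - \sum_i c i ^+ 2 + 2 * \sum_i c i.
    rewrite -big_split /= mulr_sumr -sumrN -!big_split /=.
    by apply: eq_bigr => i _; ring.
  have hr := hrel l.
  rewrite (eq_bigr (fun i => (y i + 1 - c i) ^+ 2)) in hr; last first.
    by move=> i _; rewrite -natr1.
  rewrite e0 /K0; move: e1; rewrite hr => e1; lra.
have [w w0 wM] := transfer pp (ex_intro2 _ _ v v0 vM).
pose h : {poly 'F_p} := \poly_(j < d.+1) w 0 (lift ord0 (inord j)).
have hz : forall l, w 0 ord0 * (Sp p d).[(x l)%:R] + h.[(x l)%:R] = 0.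
  move=> l; move/rowP: wM => /(_ l); rewrite !mxE => <-.
  rewrite big_ord_recl !mxE /E unlift_none Sp_eval //; congr (_ + _).
  rewrite horner_poly; apply: eq_bigr => j _; rewrite !mxE liftK inord_val Fp_natX //.
have xzi : injective (fun l => ((x l)%:R : 'F_p)).
  by move=> l l' /(Fp_inj pp (xp l) (xp l')) /xi.
case: (eqVneq (w 0 ord0) 0) => hw0.
  have h0 : h = 0.
    apply: (few_roots xzi); first by apply: (leq_trans (size_poly _ _)).
    by move=> l; have := hz l; rewrite hw0 mul0r add0r.
  move/eqP: w0; case; apply/rowP => j; rewrite mxE.
  case: (unliftP ord0 j) => [j'|] ->; last by rewrite hw0.
  have := congr1 (fun q : {poly 'F_p} => q`_j') h0; rewrite coef_poly ltn_ord inord_val coef0.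
  by move=> ->.
exists ((w 0 ord0)^-1 *: h); split; first by rewrite (leq_trans (size_scale_leq _ _)) // size_poly.
move=> l; rewrite hornerD hornerZ -(mulKf hw0 (Sp p d).[_]) -mulrDr.
by rewrite hz mulr0.
Qed.

Lemma Sp_coef p d k : (d < k)%N ->
  (Sp p d)`_k = (\sum_(i < d) (k == (i.+1).*2))%N%:R.
Proof.
move=> dk; rewrite /Sp coef_sum natr_sum; apply: eq_bigr => i _.
rewrite sqrrD1 -exprM !coefD !coefXn coef1 muln2.
have -> : (k == i.+1) = false by apply/eqP => e; have := ltn_ord i; lia.
have -> : (k == 0%N) = false by apply/eqP => e; lia.
by rewrite !addr0.
Qed.

Lemma sum_ind0 d k : (forall i : 'I_d, k != (i.+1).*2) -> (\sum_(i < d) (k == (i.+1).*2))%N = 0%N.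
Proof. by move=> h; apply: big1 => i _; rewrite (negbTE (h i)). Qed.

Lemma Sp_props p d : prime p -> (2 <= d)%N ->
  [/\ size (Sp p d) = (d.*2).+1, lead_coef (Sp p d) = 1 & (Sp p d)`_(d.*2.-1) = 0].
Proof.
move=> pp d2.
have c2d : (Sp p d)`_(d.*2) = 1.
  rewrite Sp_coef; last by lia.
  have d0 : (d.-1 < d)%N by lia.
  rewrite (bigD1 (Ordinal d0)) //= big1 ?addn0; first by rewrite prednK ?eqxx //; lia.
  move=> i hi; case: eqP => // e; move/eqP: hi; case; apply: val_inj => /=; lia.
have size1 : (size (Sp p d) <= (d.*2).+1)%N.
  apply/leq_sizeP => j hj; rewrite Sp_coef; last by lia.
  rewrite sum_ind0 // => i; apply/eqP => e; have := ltn_ord i; lia.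
have sizeE : size (Sp p d) = (d.*2).+1.
  apply/eqP; rewrite eqn_leq size1 /=; rewrite ltnNge; apply/negP => /leq_sizeP /(_ _ (leqnn _)).
  by rewrite c2d; apply/eqP; rewrite oner_eq0.
split => //; first by rewrite lead_coefE sizeE.
rewrite Sp_coef; last by lia.
by rewrite sum_ind0 // => i; apply/eqP => e; have := ltn_ord i; lia.
Qed.

Lemma sphere_core (R : realType) p d m (x : 'I_(d.*2) -> nat) (c : 'I_d -> R) (r : R) :
  prime p -> (2 <= d)%N -> (d.*2 * m < p)%N -> injective x -> (forall l, 0 < x l <= m)%N ->
  (forall l, \sum_(i < d) (((x l ^ i.+1 %% p).+1)%:R - c i) ^+ 2 = r ^+ 2) -> False.
Proof.
move=> pp d2 hm xi xb hrel.
have xp : forall l, (x l < p)%N.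
  move=> l; have := xb l; move: hm; nia.
have D2 : (d.+1 < d.*2)%N by lia.
pose k0 : 'I_(d.*2) := Ordinal D2.
pose u (k : 'I_(d.*2)) (l : 'I_d.+2) : 'I_(d.*2) :=
  if (l < d.+1)%N then insubd k (val l) else k.
have uv : forall k (l : 'I_d.+2), val (u k l) = if (l < d.+1)%N then val l else val k.
  move=> k l; rewrite /u; case: ifP => // hl; rewrite val_insubd /=; case: ifP => // h; lia.
have uval : forall k (l : 'I_d.+2), (l < d.+1)%N -> val (u k l) = val l.
  by move=> k l hl; rewrite uv hl.
have umax : forall k, u k ord_max = k by move=> k; rewrite /u /= ltnn.
have uinj : forall k : 'I_(d.*2), (d.+1 <= k)%N -> injective (fun l => x (u k l)).
  move=> k hk l l' /xi /(congr1 val); rewrite !uv /=.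
  have := ltn_ord l; have := ltn_ord l'.
  by case: (ltnP l d.+1) => h1; case: (ltnP l' d.+1) => h2 /= ? ? e; apply: ord_inj; lia.
have G : forall k : 'I_(d.*2), (d.+1 <= k)%N -> exists g : {poly 'F_p},
    (size g <= d.+1)%N /\ forall l, (Sp p d + g).[(x (u k l))%:R] = 0.
  move=> k hk; apply: (sphere_sub (c := c) (r := r) pp (uinj k hk)) => // l.
have [g0 [sg0 hg0]] := G k0 (leqnn _).
have xzi : injective (fun l : 'I_d.+1 => ((x (u k0 (widen_ord (leqnSn _) l)))%:R : 'F_p)).
  move=> l l' /(Fp_inj pp (xp _) (xp _)) /(uinj k0 (leqnn _)) /(congr1 val) /= e.
  exact: val_inj.
have hall : forall l, (Sp p d + g0).[(x l)%:R] = 0.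
  move=> l; case: (ltnP l d.+1) => hl.
    have hl2 : (l < d.+2)%N by lia.
    have := hg0 (Ordinal hl2); congr (_.[_%:R] = _); congr x; apply: val_inj.
    by rewrite uval.
  have [gl [sgl hgl]] := G l hl.
  suff e : gl = g0 by rewrite -e -(umax l).
  apply/eqP; rewrite -subr_eq0; apply/eqP; apply: (few_roots xzi).
    by rewrite (leq_trans (size_polyD _ _)) // size_polyN geq_max sgl sg0.
  move=> j; have e : x (u l (widen_ord (leqnSn _) j)) = x (u k0 (widen_ord (leqnSn _) j)).
    have hw : (widen_ord (leqnSn d.+1) j < d.+1)%N := ltn_ord j.
    by congr x; apply: val_inj; rewrite (uval l _ hw) (uval k0 _ hw).
  have h1 := hgl (widen_ord (leqnSn _) j); have h2 := hg0 (widen_ord (leqnSn _) j).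
  rewrite e in h1; move: h1 h2; rewrite !hornerD hornerN => h1 h2.
  set z := ((x (u k0 (widen_ord (leqnSn d.+1) j)))%:R : 'F_p) in h1 h2 *.
  by apply/eqP; rewrite subr_eq0 -(inj_eq (addrI (Sp p d).[z])) h1 h2.
have [sS lS cS] := Sp_props pp d2.
pose f := Sp p d + g0.
pose rs := [seq ((x l)%:R : 'F_p) | l <- enum 'I_(d.*2)].
have srs : size rs = d.*2 by rewrite size_map size_enum_ord.
have sf : size f = (size rs).+1.
  rewrite /f size_polyDl; first by rewrite sS srs.
  rewrite sS; lia.
have lf : lead_coef f = 1.
  rewrite /f lead_coefDl ?lS //; rewrite sS; lia.
have rf : all (root f) rs by apply/allP => z /mapP[l _ ->]; rewrite /root hall.
have urs : uniq_roots rs.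
  rewrite uniq_rootsE map_inj_uniq ?enum_uniq //.
  by move=> l l' /(Fp_inj pp (xp _) (xp _)) /xi.
have ef := all_roots_prod_XsubC sf rf urs.
have := congr1 (fun q : {poly 'F_p} => q`_((size rs).-1)) ef.
rewrite lf scale1r coefPn_prod_XsubC; last by rewrite srs; lia.
rewrite /f coefD srs cS add0r nth_default; last by apply: (leq_trans sg0); lia.
move/eqP; rewrite eq_sym oppr_eq0 /rs big_map -natr_sum.
rewrite -(dvdn_pcharf (pchar_Fp pp)) => hdiv.
have s0 : (0 < \sum_(l <- enum 'I_(d.*2)) x l)%N.
  rewrite big_enum /=; have d0 : (0 < d.*2)%N by lia.
  rewrite (bigD1 (Ordinal d0)) //=; have := xb (Ordinal d0); lia.
have s1 : (\sum_(l <- enum 'I_(d.*2)) x l <= d.*2 * m)%N.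
  rewrite big_enum /=; apply: (@leq_trans (\sum_(l < d.*2) m)).
    by apply: leq_sum => l _; have := xb l; lia.
  by rewrite sum_nat_const card_ord.
have := dvdn_leq s0 hdiv; lia.
Qed.

Lemma extract (m k : nat) (T : {set 'I_m}) : (k <= #|T|)%N ->
  exists x : 'I_k -> 'I_m, injective x /\ forall l, x l \in T.
Proof.
move=> hk; exists (fun l => enum_val (widen_ord hk l)); split.
  by move=> l l' /enum_val_inj /(congr1 val) /= e; exact: val_inj.
by move=> l; exact: enum_valP.
Qed.

Lemma real_bound (R : realType) K n a : (0 < K)%N -> (n <= K * a)%N ->
  (K%:R : R)^-1 * n%:R <= a%:R.
Proof.
move=> K0 h; have K0' : 0 < (K%:R : R) by rewrite ltr0n.
rewrite -(ler_pM2l K0') mulrA mulfV ?mul1r ?gt_eqF // -natrM ler_nat //.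
Qed.

Section Construction.
Variables (R : realType) (d n p m : nat).
Hypotheses (hd : (2 <= d)%N) (pp : prime p) (pn : (p <= n)%N) (hm : (d.*2 * m < p)%N).

Let p0 : (0 < p)%N. Proof. exact: prime_gt0. Qed.

Definition pt (t : nat) : {ffun 'I_d -> 'I_n} :=
  [ffun i : 'I_d => Ordinal (leq_trans (ltn_pmod (t ^ (i : nat).+1) p0) pn)].

Definition fpt (t : 'I_m) := pt t.+1.

Definition Aset := fpt @: [set: 'I_m].

Lemma mp : (m < p)%N. Proof. by move: hm; nia. Qed.

Lemma fpt_inj : injective fpt.
Proof.
move=> t t' /ffunP e; have d0 : (0 < d)%N by lia.
have := e (Ordinal d0); move/(congr1 val); rewrite /fpt /pt !ffunE /= !expn1.
have := mp; have := ltn_ord t; have := ltn_ord t'.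
move=> h1 h2 h3; rewrite !modn_small; [move=> e'; apply: ord_inj; lia | lia | lia].
Qed.

Lemma card_Aset : #|Aset| = m.
Proof. by rewrite card_imset ?cardsT ?card_ord //; exact: fpt_inj. Qed.

Lemma preimage_card (S : {set {ffun 'I_d -> 'I_n}}) : S \subset Aset ->
  #|fpt @^-1: S| = #|S|.
Proof.
move=> hS; have eS : S = fpt @: (fpt @^-1: S).
  apply/setP => s; apply/idP/imsetP => [sS|[t]]; last by rewrite inE => ? ->.
  have := subsetP hS s sS; rewrite /Aset => /imsetP[t _ e]; subst s.
  by exists t; rewrite ?inE.
by rewrite [in RHS]eS card_imset //; exact: fpt_inj.
Qed.

Lemma grid_fpt (t : 'I_m) i : grid_pt R (fpt t) i = ((t.+1 ^ i.+1 %% p).+1)%:R.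
Proof. by rewrite /grid_pt /fpt /pt ffunE. Qed.

Lemma Aset_hyper : no_k_on_hyperplane R d.+1 Aset.
Proof.
move=> a b ha S hS hon; rewrite ltnNge; apply/negP => hk.
rewrite -preimage_card // in hk.
have [x [xi xT]] := extract hk.
apply: (@hyper_core R p d (fun l => (x l).+1) a b pp) => //.
- by move=> l l' [] /val_inj /xi.
- by move=> l; have := ltn_ord (x l); have := mp; lia.
- move=> l; have hx : fpt (x l) \in S by have := xT l; rewrite inE.
  have := hon _ hx.
  by rewrite /on_hyperplane => <-; apply: eq_bigr => i _; rewrite grid_fpt.
Qed.

Lemma Aset_sphere : no_k_on_sphere R (2 * d) Aset.
Proof.
move=> c r hr S hS hon; rewrite ltnNge; apply/negP => hk.
rewrite -preimage_card // mul2n in hk.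
have [x [xi xT]] := extract hk.
apply: (@sphere_core R p d m (fun l => (x l).+1) c r pp hd hm).
- by move=> l l' [] /val_inj /xi.
- by move=> l; have := ltn_ord (x l); lia.
- move=> l; have hx : fpt (x l) \in S by have := xT l; rewrite inE.
  have := hon _ hx.
  by rewrite /on_sphere => <-; apply: eq_bigr => i _; rewrite grid_fpt.
Qed.

End Construction.

Lemma single_ok (R : realType) d n (g : {ffun 'I_d -> 'I_n}) : (2 <= d)%N ->
  no_k_on_hyperplane R d.+1 [set g] /\ no_k_on_sphere R (2 * d) [set g].
Proof.
move=> hd; split.
  move=> a b _ S hS _; have := subset_leq_card hS; rewrite cards1; lia.
move=> c r _ S hS _; have := subset_leq_card hS; rewrite cards1; lia.
Qed.

Unset Implicit Arguments. Set Strict Implicit.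

Theorem theorem4p1 (R : realType) (d : nat) (hd : (2 <= d)%N) :
  exists c : R, 0 < c /\
    forall n : nat, (0 < n)%N ->
      exists A : {set {ffun 'I_d -> 'I_n}},
        c * n%:R <= #|A|%:R /\
        no_k_on_hyperplane R d.+1 A /\
        no_k_on_sphere R (2 * d) A.
Proof.
pose N0 := (2 * 4225 + 8 * d)%N.
pose K := (N0 * (8 * d))%N.
have K0 : (0 < K)%N by rewrite /K /N0; lia.
exists (K%:R^-1); split; first by rewrite invr_gt0 ltr0n.
move=> n n0.
case: (ltnP n N0) => hn.
  pose g : {ffun 'I_d -> 'I_n} := [ffun => Ordinal n0].
  exists [set g]; split; last exact: single_ok.
  apply: real_bound => //; rewrite cards1 muln1 /K; nia.
have hdh := odd_double_half n; rewrite -muln2 in hdh.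
have ho : (odd n <= 1)%N by case: odd.
have hn2 : (4225 <= n./2)%N by rewrite /N0 in hn; lia.
have [p pp /andP[hp1 hp2]] := bertrand_large hn2.
have pn : (p <= n)%N by lia.
pose m := ((p.-1) %/ (d.*2))%N.
have d20 : (0 < d.*2)%N by lia.
have hm : (d.*2 * m < p)%N.
  rewrite /m mulnC; apply: (leq_ltn_trans (leq_trunc_div _ _)); have := prime_gt0 pp; lia.
exists (Aset d m pp pn); split; last by split; [exact: (@Aset_hyper R d n p m hd pp pn hm) | exact: (@Aset_sphere R d n p m hd pp pn hm)].
rewrite card_Aset //; apply: real_bound => //.
have h1 : (p.-1 < (m.+1) * d.*2)%N by rewrite /m; apply: ltn_ceil.
have h2 : (n < 2 * p)%N by lia.
rewrite /K; nia.
Qed.
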